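(* Let $n\geqslant 1$, let $B=\{g,e\}$ and let $Q$ be the set of monoid relations on $B$: (Q1) $g^n=1$; (Q2) $e^2=e$; (Q3) $eg^{n-j+i}eg^{n-i+j}=g^{n-j+i}eg^{n-i+j}e$ for $1\leqslant i<j\leqslant n$; (Q4) $g(eg^{n-1})^n=(eg^{n-1})^n$. Then $\langle B\mid Q\rangle$ is a monoid presentation of $\mathcal{CI}_n$ with respect to the map $g\mapsto g$, $e\mapsto e_1$. It has $2$ generators and $\frac12(n^2-n+6)$ relations.
   Context: Let $\Omega_n=\{1,\ldots,n\}$, $\mathcal{I}_n$ the symmetric inverse monoid on $\Omega_n$ (maps on the right, composed left to right). $g$ is the permutation $ig=i+1$ ($1\leqslant i\leqslant n-1$), $ng=1$; $\mathcal{C}_n=\{1,g,\ldots,g^{n-1}\}$; $\mathcal{CI}_n=\{\alpha\in\mathcal{I}_n\mid \alpha=\sigma|_{\mathrm{Dom}(\alpha)}\text{ for some }\sigma\in\mathcal{C}_n\}$; $e_1$ is the partial identity on $\Omega_n\setminus\{1\}$. A presentation $\langle B\mid Q\rangle$ defines a monoid $M$ via a map $\phi:B\to M$ if $\phi$ is injective, $B\phi$ generates $M$, and the induced homomorphism $B^*\to M$ has kernel equal to the smallest congruence on $B^*$ containing $Q$. *)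

(* Defs.v *)
From mathcomp Require Import all_boot.
From Stdlib Require List.
Set Implicit Arguments. Unset Strict Implicit. Unset Printing Implicit Defensive.

(* Omega_n = {1,...,n} is modelled by 'I_n = {0,...,n-1}; the point 1 is the
   ordinal with value 0.  A partial transformation of Omega_n is a finite
   function 'I_n -> option 'I_n (None = undefined). *)
Definition ptrans (n : nat) := {ffun 'I_n -> option 'I_n}.

(* maps act on the right, composed left to right: x (a b) = (x a) b *)
Definition pcomp n (a b : ptrans n) : ptrans n := [ffun x => obind b (a x)].
Definition pid n : ptrans n := [ffun x => Some x].

Definition gperm n (x : 'I_n) : 'I_n := ordS x.
Definition gmap n : ptrans n := [ffun x => Some (gperm x)].

Definition e1map n : ptrans n :=
  [ffun x => if val x == 0 then None else Some x].

Definition in_In n (a : ptrans n) : Prop :=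
  forall x y z, a x = Some z -> a y = Some z -> x = y.

Definition in_CIn n (a : ptrans n) : Prop :=
  in_In a /\
  exists k : nat, forall x : 'I_n, a x = None \/ a x = Some (iter k (@gperm n) x).

Inductive gen := Gg | Ge.
Definition word := seq gen.

Definition phi n (b : gen) : ptrans n :=
  match b with Gg => gmap n | Ge => e1map n end.

Fixpoint ev n (w : word) : ptrans n :=
  match w with
  | [::] => pid n
  | b :: w' => pcomp (phi n b) (ev n w')
  end.

Inductive congr (Q : seq (word * word)) : word -> word -> Prop :=
| congr_rel u x y v : List.In (x, y) Q -> congr Q (u ++ x ++ v) (u ++ y ++ v)
| congr_refl u : congr Q u u
| congr_sym u v : congr Q u v -> congr Q v u
| congr_trans u v w : congr Q u v -> congr Q v w -> congr Q u w.

Definition gpow (k : nat) : word := nseq k Gg.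

Definition Q1 n : seq (word * word) := [:: (gpow n, [::])].
Definition Q2 : seq (word * word) := [:: ([:: Ge; Ge], [:: Ge])].
Definition Q3 n : seq (word * word) :=
  [seq (Ge :: gpow (n - j + i) ++ Ge :: gpow (n - i + j),
        gpow (n - j + i) ++ Ge :: gpow (n - i + j) ++ [:: Ge])
  | j <- iota 1 n, i <- iota 1 j.-1].
Definition Q4 n : seq (word * word) :=
  let u := flatten (nseq n (Ge :: gpow (n - 1))) in [:: (Gg :: u, u)].
Definition Qrels n : seq (word * word) := Q1 n ++ Q2 ++ Q3 n ++ Q4 n.

Definition is_presentation n (Q : seq (word * word)) : Prop :=
  injective (phi n) /\
  (forall w, in_CIn (ev n w)) /\
  (forall a, in_CIn a -> exists w, ev n w = a) /\
  (forall u v, ev n u = ev n v <-> congr Q u v).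

(* Main.v *)
Require Import Defs.
From mathcomp Require Import all_boot zify.
From Stdlib Require Import Setoid Morphisms.
Notation pcomp := Defs.pcomp.
Notation pid := Defs.pid.
Set Implicit Arguments. Unset Strict Implicit. Unset Printing Implicit Defensive.

Lemma congr_cat Q x y u v : congr Q x y -> congr Q (u ++ x ++ v) (u ++ y ++ v).
Proof.
elim=> [u0 x0 y0 v0 H|w|w1 w2 _ IH|w1 w2 w3 _ IH1 _ IH2].
- by have := congr_rel (u ++ u0) (v0 ++ v) H; rewrite !catA.
- exact: congr_refl.
- exact: congr_sym.
- exact: congr_trans IH2.
Qed.
#[global] Instance C_equiv Q : Equivalence (congr Q).
Proof. split; [exact: congr_refl|exact: congr_sym|exact: congr_trans]. Qed.
#[global] Instance cat_proper Q : Proper (congr Q ==> congr Q ==> congr Q) (@cat gen).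
Proof.
move=> x y Hxy x' y' H'.
transitivity (y ++ x').
- by have := congr_cat [::] x' Hxy; rewrite /= .
- by move: (congr_cat y [::] H'); rewrite !cats0.
Qed.
#[global] Instance cons_proper Q b : Proper (congr Q ==> congr Q) (cons b).
Proof. by move=> x y H; apply: (cat_proper (congr_refl Q [:: b]) H). Qed.

Lemma mod_eq_n n x y q : x = y + q * n -> x %% n = y %% n.
Proof. by move=> ->; rewrite addnC modnMDl. Qed.

Lemma gpowD a b : gpow (a + b) = gpow a ++ gpow b.
Proof. exact: nseqD. Qed.
Lemma gpowS a : gpow a.+1 = Gg :: gpow a.
Proof. by []. Qed.

Section Main.
Variable m : nat.
Local Notation n := m.+1.
Local Notation C := (congr (Qrels n)).

Lemma relC x y : List.In (x, y) (Qrels n) -> C x y.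
Proof. by move=> H; have := congr_rel [::] [::] H; rewrite /= !cats0. Qed.

Lemma gpow_n : C (gpow n) [::].
Proof. by apply: relC; left. Qed.

Lemma gpow_modq q r : C (gpow (q * n + r)) (gpow r).
Proof.
elim: q => [|q IH]; first by rewrite mul0n add0n; reflexivity.
by rewrite mulSn -addnA gpowD gpow_n.
Qed.

Lemma gpow_mod a b : a %% n = b %% n -> C (gpow a) (gpow b).
Proof.
move=> H; rewrite (divn_eq a n) (divn_eq b n) !gpow_modq H; reflexivity.
Qed.

Lemma Q2rel : C [:: Ge; Ge] [:: Ge].
Proof. by apply: relC; right; left. Qed.

Lemma In_cat_r {T} (x : T) s1 s2 : List.In x s2 -> List.In x (s1 ++ s2).
Proof. by elim: s1 => //= y s IH H; right; apply: IH. Qed.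
Lemma In_cat_l {T} (x : T) s1 s2 : List.In x s1 -> List.In x (s1 ++ s2).
Proof. by elim: s1 => //= y s IH [->|H]; [left|right; apply: IH]. Qed.
Lemma In_map {T U} (f : T -> U) x s : List.In x s -> List.In (f x) (map f s).
Proof. by elim: s => //= y s IH [->|H]; [left|right; apply: IH]. Qed.
Lemma In_flatten {T} (x : T) l L : List.In x l -> List.In l L -> List.In x (flatten L).
Proof.
move=> Hx; elim: L => //= l' L IH [->|H]; [exact: In_cat_l | exact/In_cat_r/IH].
Qed.
Lemma In_iota a len x : a <= x < a + len -> List.In x (iota a len).
Proof.
elim: len a => [|len IH] a /=; first by lia.
move=> H; case: (eqVneq a x) => [->|Hne]; [by left|right; apply: IH; lia].
Qed.

Lemma Q3In i j : 1 <= i < j -> j <= n ->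
  List.In (Ge :: gpow (n - j + i) ++ Ge :: gpow (n - i + j),
        gpow (n - j + i) ++ Ge :: gpow (n - i + j) ++ [:: Ge]) (Q3 n).
Proof.
move=> Hi Hj; rewrite /Q3.
apply: (In_flatten (l := [seq (Ge :: gpow (n - j + i0) ++ Ge :: gpow (n - i0 + j),
        gpow (n - j + i0) ++ Ge :: gpow (n - i0 + j) ++ [:: Ge]) | i0 <- iota 1 j.-1])).
  apply: (In_map (fun i0 => (Ge :: gpow (n - j + i0) ++ Ge :: gpow (n - i0 + j),
      gpow (n - j + i0) ++ Ge :: gpow (n - i0 + j) ++ [:: Ge]))).
  by apply: In_iota; lia.
apply: (In_map (fun j => [seq (Ge :: gpow (n - j + i0) ++ Ge :: gpow (n - i0 + j),
        gpow (n - j + i0) ++ Ge :: gpow (n - i0 + j) ++ [:: Ge]) | i0 <- iota 1 j.-1])).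
by apply: In_iota; lia.
Qed.

Lemma Q3rel d : 0 < d < n ->
  C (Ge :: gpow d ++ Ge :: gpow (n + (n - d)))
    (gpow d ++ Ge :: gpow (n + (n - d)) ++ [:: Ge]).
Proof.
move=> Hd; apply: relC; rewrite /Qrels; apply: In_cat_r; apply: In_cat_r; apply: In_cat_l.
have := @Q3In 1 (n - d + 1).
have -> : n - (n - d + 1) + 1 = d by lia.
have -> : n - 1 + (n - d + 1) = n + (n - d) by lia.
by apply; lia.
Qed.

Definition tpow j := flatten (nseq j (Ge :: gpow (n - 1))).

Lemma Q4rel : C (Gg :: tpow n) (tpow n).
Proof. by apply: relC; rewrite /Qrels; apply: In_cat_r; apply: In_cat_r; apply: In_cat_r; left. Qed.

Definition f a := gpow (n - a) ++ Ge :: gpow a.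

Lemma f_idem a : a <= n -> C (f a ++ f a) (f a).
Proof.
move=> Ha; rewrite /f -!catA /= catA -gpowD (subnKC Ha) gpow_n /=.
rewrite -[Ge :: Ge :: gpow a]/([:: Ge; Ge] ++ gpow a) Q2rel; reflexivity.
Qed.

Lemma e_comm d : 0 < d < n ->
  C (Ge :: gpow d ++ Ge :: gpow (n - d)) (gpow d ++ Ge :: gpow (n - d) ++ [:: Ge]).
Proof.
move=> Hd.
have H : C (gpow (n - d)) (gpow (n + (n - d))).
  by apply: gpow_mod; apply: esym; apply: (@mod_eq_n _ _ _ 1); lia.
rewrite H; exact: Q3rel.
Qed.

Lemma f_comm_lt b a : b < a -> a < n -> C (f a ++ f b) (f b ++ f a).
Proof.
move=> Hba Han; set d := a - b.
have H1 : C (gpow a ++ gpow (n - b)) (gpow d).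
  by rewrite -gpowD; apply: gpow_mod; apply: (@mod_eq_n _ _ _ 1); lia.
have H2 : C (gpow b) (gpow (n - d) ++ gpow a).
  by rewrite -gpowD; apply: gpow_mod; apply: esym; apply: (@mod_eq_n _ _ _ 1); lia.
rewrite /f.
transitivity (gpow (n - a) ++ (Ge :: gpow d ++ Ge :: gpow (n - d)) ++ gpow a).
  rewrite -!catA /= -?catA /= [gpow a ++ _]catA H1 H2 -?catA; reflexivity.
rewrite e_comm; last by lia.
have -> : gpow (n - d) = gpow b ++ gpow (n - a) by rewrite -gpowD; congr gpow; lia.
have -> : gpow (n - b) = gpow (n - a) ++ gpow d by rewrite -gpowD; congr gpow; lia.
rewrite -!catA /= -?catA /= -?catA; reflexivity.
Qed.

Lemma f_comm a b : a < n -> b < n -> C (f a ++ f b) (f b ++ f a).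
Proof.
move=> Ha Hb; case: (ltngtP a b) => H.
- symmetry; exact: f_comm_lt.
- exact: f_comm_lt.
- rewrite H; reflexivity.
Qed.

Definition Fl (l : seq nat) := flatten (map f l).
Lemma Fl_cat l1 l2 : Fl (l1 ++ l2) = Fl l1 ++ Fl l2.
Proof. by rewrite /Fl map_cat flatten_cat. Qed.
Lemma Fl_cons x l : Fl (x :: l) = f x ++ Fl l.
Proof. by []. Qed.

Lemma comm_Fl a l : a < n -> all (fun x => x < n) l -> C (f a ++ Fl l) (Fl l ++ f a).
Proof.
move=> Ha; elim: l => [|x l IH] /=; first by rewrite /Fl /= cats0; reflexivity.
case/andP=> Hx Hl; rewrite Fl_cons catA f_comm // -catA IH // !catA; reflexivity.
Qed.

Lemma Fl_absorb a l : a \in l -> all (fun x => x < n) l -> C (f a ++ Fl l) (Fl l).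
Proof.
elim: l => //= x l IH; rewrite in_cons => Ha /andP[Hx Hl].
rewrite Fl_cons; case: (eqVneq a x) => [->|Hne].
  by rewrite catA f_idem; [reflexivity | exact: ltnW].
move: Ha; rewrite (negPf Hne) /= => Ha.
have Han : a < n by exact: (allP Hl a Ha).
rewrite catA f_comm // -catA IH //; reflexivity.
Qed.

Lemma Fl_undup l : all (fun x => x < n) l -> C (Fl l) (Fl (undup l)).
Proof.
elim: l => [|x l IH] /=; first reflexivity.
case/andP=> Hx Hl; rewrite Fl_cons; case: ifP => Hin.
  by rewrite Fl_absorb //; exact: IH.
by rewrite Fl_cons IH //; reflexivity.
Qed.

Lemma Fl_perm l1 l2 : all (fun x => x < n) l1 -> perm_eq l1 l2 -> C (Fl l1) (Fl l2).
Proof.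
elim: l1 l2 => [|x l1 IH] l2 /=.
  move=> _ Hp; have := perm_size Hp; case: l2 {Hp} => //= _; reflexivity.
case/andP=> Hx Hl Hp.
have Hx2 : x \in l2 by rewrite -(perm_mem Hp) mem_head.
have Hall2 : all (fun x => x < n) l2 by rewrite -(perm_all _ Hp) /= Hx Hl.
move: Hp Hall2; case/splitPr: Hx2 => l2a l2b Hp Hall2.
rewrite Fl_cat Fl_cons Fl_cons catA -comm_Fl //; last first.
  by move: Hall2; rewrite all_cat => /andP[].
rewrite -catA -Fl_cat; apply: cat_proper; first reflexivity.
apply: IH => //.
rewrite -(perm_cons x); apply: (perm_trans Hp).
by rewrite -cat1s perm_catCA.
Qed.

Lemma Fl_set l1 l2 : all (fun x => x < n) l1 -> l1 =i l2 -> C (Fl l1) (Fl l2).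
Proof.
move=> H1 H; have H2 : all (fun x => x < n) l2 by rewrite -(eq_all_r H).
rewrite (Fl_undup H1) (Fl_undup H2); apply: Fl_perm.
  by rewrite (eq_all_r (mem_undup l1)).
apply: uniq_perm; try exact: undup_uniq.
by move=> x; rewrite !mem_undup H.
Qed.

Lemma mod2 a : a < n + n -> a %% n = if a < n then a else a - n.
Proof.
case: ifP => H Ha; first by rewrite modn_small.
rewrite {1}(_ : a = (a - n) + n); last by lia.
by rewrite modnDr modn_small //; lia.
Qed.

Definition state := ({set 'I_n} * nat)%type.
Definition pt (k : nat) : 'I_n := inord ((n - k %% n) %% n).
Definition step (st : state) (b : gen) : state :=
  match b with Gg => (st.1, st.2.+1) | Ge => (pt st.2 |: st.1, st.2) end.
Definition run := foldl step.
Definition sem (st : state) : ptrans n :=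
  [ffun x => if x \in st.1 then None else Some (iter st.2 (@gperm n) x)].

Lemma iter_val k (x : 'I_n) : nat_of_ord (iter k (@gperm n) x) = (x + k) %% n.
Proof.
elim: k => [|k IH] /=; first by rewrite addn0 modn_small.
by rewrite IH /= -addn1 modnDml addn1 addnS.
Qed.

Lemma iter_valE k (x : 'I_n) : \val (iter k (@gperm n) x) = (x + k) %% n.
Proof. exact: iter_val. Qed.

Lemma pt_val k : nat_of_ord (pt k) = (n - k %% n) %% n.
Proof. by rewrite /pt inordK // ltn_pmod. Qed.

Lemma pt_spec (x : 'I_n) k : (x == pt k) = ((x + k) %% n == 0).
Proof.
rewrite -val_eqE /= pt_val -modnDmr.
have Hr : k %% n < n by rewrite ltn_pmod.
have Hx := ltn_ord x.
move: Hr; set r := k %% n => Hr.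
case: (posnP r) => Hr0.
  by rewrite Hr0 subn0 modnn addn0 modn_small.
rewrite (modn_small (m := n - r)); last by lia.
rewrite mod2; last by lia.
by apply/eqP/eqP; case: ifP => H; lia.
Qed.

Lemma ptransP (a b : ptrans n) : (forall x, a x = b x) -> a = b.
Proof. move=> H; apply/ffunP; exact: H. Qed.

Lemma pcompA (a b c : ptrans n) : pcomp a (pcomp b c) = pcomp (pcomp a b) c.
Proof. by apply: ptransP => x; rewrite !ffunE; case: (a x) => //= y; rewrite ffunE. Qed.
Lemma pcomp_pid (a : ptrans n) : pcomp a (pid n) = a.
Proof. by apply: ptransP => x; rewrite !ffunE; case: (a x) => //= y; rewrite ffunE. Qed.
Lemma pid_pcomp (a : ptrans n) : pcomp (pid n) a = a.
Proof. by apply: ptransP => x; rewrite !ffunE. Qed.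

Lemma sem_step st b : pcomp (sem st) (phi n b) = sem (step st b).
Proof.
apply: ptransP => x; case: st => S k; case: b; rewrite !ffunE /=.
  by case: (x \in S) => //=; rewrite ffunE.
rewrite in_setU1; case: (x \in S); first by rewrite orbT.
by rewrite orbF /= ffunE pt_spec -(iter_val k x).
Qed.

Lemma ev_run w st : pcomp (sem st) (ev n w) = sem (run st w).
Proof.
elim: w st => [|b w IH] st /=; first exact: pcomp_pid.
by rewrite pcompA sem_step IH.
Qed.

Definition st0 : state := (set0, 0).
Lemma sem0 : sem st0 = pid n.
Proof. by apply: ptransP => x; rewrite !ffunE in_set0. Qed.
Lemma ev_sem w : ev n w = sem (run st0 w).
Proof. by rewrite -ev_run sem0 pid_pcomp. Qed.
Lemma ev_cat u v : ev n (u ++ v) = pcomp (ev n u) (ev n v).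
Proof. elim: u => [|b u IH] /=; [by rewrite pid_pcomp | by rewrite IH pcompA]. Qed.

Lemma sem_mod S k k' : k %% n = k' %% n -> sem (S, k) = sem (S, k').
Proof.
move=> H; apply: ptransP => x; rewrite !ffunE /=; case: ifP => // _.
by congr Some; apply: val_inj; rewrite !iter_valE -modnDmr H modnDmr.
Qed.

Lemma run_gpow st a : run st (gpow a) = (st.1, st.2 + a).
Proof.
elim: a st => [|a IH] [S k] /=; first by rewrite addn0.
by rewrite IH /= addSnnS.
Qed.
Lemma run_cat st u v : run st (u ++ v) = run (run st u) v.
Proof. exact: foldl_cat. Qed.
Lemma pt_mod k k' : k %% n = k' %% n -> pt k = pt k'.
Proof. by rewrite /pt => ->. Qed.

Lemma run_mono (st : state) (w : word) : st.1 \subset (run st w).1.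
Proof.
elim: w st => [|b w IH] st /=; first exact: subxx.
apply: subset_trans (IH _); case: b => /=; [exact: subxx | exact: subsetUr].
Qed.

Lemma run_tpow j : forall (st : state) (x : 'I_n), (x + st.2) %% n < j -> x \in (run st (tpow j)).1.
Proof.
elim: j => [|j IH] st x //.
rewrite [tpow _]/= run_cat /= run_gpow /= => Hj.
case: (eqVneq ((x + st.2) %% n) 0) => H0.
  apply: (subsetP (run_mono _ _)); by rewrite /= in_setU1 pt_spec H0 eqxx.
apply: IH => /=; rewrite addnA -modnDml.
have Hr : (x + st.2) %% n < n by rewrite ltn_pmod.
move: Hj H0 Hr; set r := (x + st.2) %% n => Hj H0 Hr.
rewrite (_ : r + (n - 1) = r.-1 + n); last by lia.
by rewrite modnDr modn_small; lia.
Qed.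

Lemma run_tpow_full (st : state) : (run st (tpow n)).1 = setT.
Proof. by apply/setP => x; rewrite in_setT run_tpow // ltn_pmod. Qed.

Lemma In_cat_inv {T} (x : T) s1 s2 : List.In x (s1 ++ s2) -> List.In x s1 \/ List.In x s2.
Proof.
elim: s1 => /= [|y s IH] H; first by right.
case: H => [->|H]; first by left; left.
by case: (IH H) => ?; [left; right | right].
Qed.
Lemma In_flatten_inv {T} (x : T) L : List.In x (flatten L) -> exists l, List.In l L /\ List.In x l.
Proof.
elim: L => //= l L IH H; case: (In_cat_inv H) => H'; first by exists l; auto.
by case: (IH H') => l' [H1 H2]; exists l'; auto.
Qed.
Lemma In_map_inv {T U} (f : T -> U) y s : List.In y (map f s) -> exists x, List.In x s /\ y = f x.
Proof.
elim: s => //= x s IH [<-|H]; first by exists x; auto.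
by case: (IH H) => x' [H1 H2]; exists x'; auto.
Qed.
Lemma In_iota_inv a len x : List.In x (iota a len) -> a <= x < a + len.
Proof.
elim: len a => //= len IH a [<-|H]; first lia.
have := IH _ H; lia.
Qed.

Lemma ev_empty w : (run st0 w).1 = setT -> ev n w = [ffun => None].
Proof.
move=> H; rewrite ev_sem; apply: ptransP => x; rewrite !ffunE H in_setT //.
Qed.

Lemma rel_sound x y : List.In (x, y) (Qrels n) -> ev n x = ev n y.
Proof.
rewrite /Qrels => H0.
case: (In_cat_inv H0) => [[[<- <-]|//]|H1].
  rewrite !ev_sem (_ : Gg :: gpow m = gpow n) // run_gpow /=; apply: sem_mod; by rewrite add0n modnn.
case: (In_cat_inv H1) => [[[<- <-]|//]|H2].
  by rewrite !ev_sem /= setUA setUid.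
case: (In_cat_inv H2) => [H|[[<- <-]|//]]; last first.
  rewrite (_ : Ge :: gpow (n - 1) ++ flatten (nseq m (Ge :: gpow (n - 1))) = tpow n) //.
  change (pcomp (phi n Gg) (ev n (tpow n)) = ev n (tpow n)).
  rewrite (ev_empty (run_tpow_full st0)).
  by apply: ptransP => z; rewrite !ffunE /= ?ffunE.
case: (In_flatten_inv H) => l [Hl Hxl].
case: (In_map_inv Hl) => j [Hj Hlj]; subst l.
case: (In_map_inv Hxl) => i [Hi [-> ->]].
  move/In_iota_inv: Hj => Hj; move/In_iota_inv: Hi => Hi.
  rewrite !ev_sem /= !run_cat /= !run_gpow /= ?run_cat /= ?run_gpow /=.
  rewrite (@pt_mod (0 + (n - j + i) + (n - i + j)) 0); last first.
    by apply: (@mod_eq_n _ _ _ 2); lia.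
  by rewrite setUCA.
Qed.

Lemma congr_sound u v : C u v -> ev n u = ev n v.
Proof.
elim=> [u0 x0 y0 v0 H|w|w1 w2 _ IH|w1 w2 w3 _ IH1 _ IH2] //.
- by rewrite !ev_cat (rel_sound H).
- by rewrite IH1.
Qed.

Lemma run_f (st : state) j : j < n -> st.2 %% n = 0 -> run st (f j) = (inord j |: st.1, st.2 + n).
Proof.
move=> Hj Hk; rewrite /f run_cat run_gpow /= run_gpow /=.
congr pair; last by lia.
congr setU; congr set1; rewrite /pt; congr inord.
rewrite -modnDml Hk add0n.
case: (posnP j) => Hj0; first by rewrite Hj0 subn0 modnn subn0 modnn.
by rewrite (modn_small (m := n - j)) ?modn_small; lia.
Qed.

Lemma run_Fl l (st : state) : all (fun x => x < n) l -> st.2 %% n = 0 ->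
  run st (Fl l) = ([set x : 'I_n | nat_of_ord x \in l] :|: st.1, st.2 + n * size l).
Proof.
elim: l st => [|j l IH] [S k] /=.
  move=> _ _; rewrite /Fl /= muln0 addn0; congr pair.
  by apply/setP => x; rewrite !inE.
case/andP=> Hj Hl Hk; rewrite Fl_cons run_cat run_f // IH //=; last first.
  by rewrite modnDr.
congr pair; last by rewrite mulnS; lia.
apply/setP => x; rewrite !inE -val_eqE /= inordK //.
by case: (nat_of_ord x == j); case: (nat_of_ord x \in l); case: (x \in S).
Qed.

Definition E (S : {set 'I_n}) := Fl (map (@nat_of_ord n) (enum S)).
Definition W (st : state) := E st.1 ++ gpow st.2.

Lemma allE (S : {set 'I_n}) : all (fun x => x < n) (map (@nat_of_ord n) (enum S)).
Proof. by apply/allP => y /mapP [z _ ->]. Qed.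

Lemma in_CIn_sem st : in_CIn (sem st).
Proof.
split.
  move=> x y z; rewrite !ffunE; case: ifP => // _ [<-]; case: ifP => // _ [] Hxy.
  apply: val_inj; have := congr1 (@nat_of_ord n) Hxy; rewrite !iter_val => /eqP.
  by rewrite eqn_modDr => /eqP; rewrite !modn_small.
exists st.2 => x; rewrite ffunE; case: ifP; [left|right] => //.
Qed.

Lemma surj a : in_CIn a -> exists w, ev n w = a.
Proof.
case=> _ [k Hk].
set S := [set x | a x == None].
exists (E S ++ gpow k).
rewrite ev_sem run_cat run_Fl ?allE // run_gpow /=.
have -> : [set x : 'I_n | nat_of_ord x \in map (@nat_of_ord n) (enum S)] :|: set0 = S.
  by apply/setP => x; rewrite setU0 inE (mem_map val_inj) mem_enum.
rewrite (@sem_mod _ _ k); last by rewrite add0n mulnC modnMDl.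
apply: ptransP => x; rewrite !ffunE /= inE.
by case: (Hk x) => ->.
Qed.

Lemma step_W st b : C (W st ++ [:: b]) (W (step st b)).
Proof.
case: st => S k; case: b; rewrite /W /=.
  rewrite -catA (_ : gpow k ++ [:: Gg] = gpow k.+1); first reflexivity.
  by rewrite -[[:: Gg]]/(gpow 1) -gpowD addn1.
set p := pt k.
have H : C (gpow k ++ [:: Ge]) (f p ++ gpow k).
  rewrite /f -catA /= -gpowD.
  have Hr : k %% n < n by rewrite ltn_pmod.
  have Hp := pt_val k; rewrite -/p in Hp.
  have H1 : C (gpow (p + k)) [::].
    have -> : [::] = gpow 0 by [].
    apply: gpow_mod; rewrite mod0n -modnDmr Hp.
    move: Hr; set r := k %% n => Hr.
    case: (posnP r) => Hr0; first by rewrite Hr0 subn0 modnn.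
    by rewrite (modn_small (m := n - r)) ?subnK ?modnn //; lia.
  have H2 : C (gpow (n - p)) (gpow k).
    apply: gpow_mod; rewrite Hp.
    move: Hr; set r := k %% n => Hr.
    case: (posnP r) => Hr0; first by rewrite Hr0 subn0 modnn subn0 modnn.
    by rewrite (modn_small (m := n - r)) ?modn_small //; lia.
  rewrite H1 H2; reflexivity.
have H2 : C (E S ++ f p) (E (p |: S)).
  have -> : E S ++ f p = Fl (map (@nat_of_ord n) (enum S) ++ [:: nat_of_ord p]).
    by rewrite Fl_cat Fl_cons /Fl /= cats0.
  apply: Fl_set; first by rewrite all_cat allE /= ltn_ord.
  move=> j; rewrite mem_cat mem_seq1.
  case: (ltnP j n) => Hj.
    change j with (nat_of_ord (Ordinal Hj)).
    by rewrite !(mem_map val_inj) !mem_enum in_setU1 val_eqE orbC.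
  have Hn : forall T : {set 'I_n}, j \in map (@nat_of_ord n) (enum T) = false.
    by move=> T; apply/negbTE/negP => /mapP [y _ Hy]; have := ltn_ord y; lia.
  rewrite !Hn /=; apply/negbTE/negP => /eqP Hjp; have := ltn_ord p; lia.
rewrite -catA H catA H2; reflexivity.
Qed.

Lemma run_W w st : C (W st ++ w) (W (run st w)).
Proof.
elim: w st => [|b w IH] st /=; first by rewrite cats0; reflexivity.
rewrite -[b :: w]cat1s catA step_W; exact: IH.
Qed.

Lemma W0 : W st0 = [::].
Proof. by rewrite /W /E /= enum_set0. Qed.

Lemma flatten_nseqS (T : Type) (t : seq T) j : flatten (nseq j.+1 t) = flatten (nseq j t) ++ t.
Proof. by rewrite -addn1 nseqD flatten_cat /= cats0. Qed.

Lemma tpow_Fl j : j <= n -> C (tpow j) (Fl (iota 0 j) ++ gpow (n - j)).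
Proof.
elim: j => [|j IH] Hj.
  rewrite subn0 gpow_n; reflexivity.
rewrite /tpow flatten_nseqS -/(tpow j) IH; last by lia.
rewrite -[j.+1]addn1 iotaD Fl_cat Fl_cons /Fl /= add0n.
have -> : gpow (n - 1) = gpow j ++ gpow (n - (j + 1)) by rewrite -gpowD; congr gpow; lia.
rewrite /f -!catA /= -?catA; reflexivity.
Qed.

Definition Z := Fl (iota 0 n).

Lemma Z_tpow : C (tpow n) Z.
Proof. by rewrite tpow_Fl // subnn cats0; reflexivity. Qed.

Lemma gZ : C (Gg :: Z) Z.
Proof. rewrite -Z_tpow; exact: Q4rel. Qed.

Definition sh j := j.+1 %% n.

Lemma g1 : C ([:: Gg] ++ gpow (n - 1)) [::].
Proof.
have -> : [:: Gg] ++ gpow (n - 1) = gpow n by rewrite -[[:: Gg]]/(gpow 1) -gpowD; congr gpow; lia.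
exact: gpow_n.
Qed.

Lemma shift_f x : x < n -> C (gpow (n - 1) ++ f x ++ [:: Gg]) (f (sh x)).
Proof.
move=> Hx; rewrite /f -!catA /= catA -gpowD.
have -> : gpow x ++ [:: Gg] = gpow x.+1 by rewrite -[[:: Gg]]/(gpow 1) -gpowD addn1.
have Hsh : sh x = if x.+1 < n then x.+1 else 0.
  rewrite /sh; case: ifP => H; first by rewrite modn_small.
  have -> : x.+1 = n by lia.
  by rewrite modnn.
apply: cat_proper; first apply: gpow_mod.
  rewrite Hsh; case: ifP => H.
    by apply: (@mod_eq_n _ _ _ 1); lia.
  by congr modn; lia.
apply: cons_proper; apply: gpow_mod; by rewrite /sh modn_mod.
Qed.

Lemma shift_Fl l : all (fun x => x < n) l -> C (gpow (n - 1) ++ Fl l ++ [:: Gg]) (Fl (map sh l)).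
Proof.
elim: l => [|x l IH] /=.
  move=> _; rewrite /Fl /=.
  have -> : gpow (n - 1) ++ [:: Gg] = gpow n by rewrite -[[:: Gg]]/(gpow 1) -gpowD; congr gpow; lia.
  exact: gpow_n.
case/andP => Hx Hl.
rewrite Fl_cons (Fl_cons (sh x)).
transitivity ((gpow (n - 1) ++ f x ++ [:: Gg]) ++ (gpow (n - 1) ++ Fl l ++ [:: Gg])).
  symmetry; rewrite -!catA (catA [:: Gg]) g1 /=; reflexivity.
rewrite shift_f // IH //; reflexivity.
Qed.

Lemma iota_n : all (fun x => x < n) (iota 0 n).
Proof. by apply/allP => j; rewrite mem_iota. Qed.

Lemma Zg : C (Z ++ [:: Gg]) Z.
Proof.
transitivity ([:: Gg] ++ (gpow (n - 1) ++ Z ++ [:: Gg])).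
  symmetry; rewrite catA g1 /=; reflexivity.
rewrite shift_Fl ?iota_n //.
rewrite (@Fl_set (map sh (iota 0 n)) (iota 0 n)).
- exact: gZ.
- by apply/allP => j /mapP [y _ ->]; rewrite /sh ltn_pmod.
move=> j; rewrite [j \in iota 0 n]mem_iota add0n; apply/mapP/idP.
  by move=> [y _ ->]; rewrite /sh ltn_pmod.
move=> Hj; exists ((j + (n - 1)) %% n); first by rewrite mem_iota ltn_pmod.
rewrite /sh -addn1 modnDml -addnA addn1 (_ : (n - 1).+1 = n); last by lia.
by rewrite modnDr modn_small.
Qed.

Lemma Zgk k : C (Z ++ gpow k) Z.
Proof.
elim: k => [|k IH]; first by rewrite cats0; reflexivity.
by rewrite gpowS -cat1s catA Zg.
Qed.

Lemma EsetT : C (E setT) Z.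
Proof.
apply: Fl_set; first exact: allE.
move=> j; rewrite mem_iota /=.
case: (ltnP j n) => Hj.
  change j with (nat_of_ord (Ordinal Hj)).
  by rewrite (mem_map val_inj) mem_enum in_setT.
by apply/negbTE/negP => /mapP [y _ Hy]; have := ltn_ord y; lia.
Qed.

Lemma sem_complete st st' : sem st = sem st' -> C (W st) (W st').
Proof.
case: st st' => [S k] [S' k'] H.
have HS : S = S'.
  apply/setP => x; have := congr1 (fun a : ptrans n => a x) H; rewrite !ffunE /=.
  by case: (x \in S); case: (x \in S').
subst S'; rewrite /W /=.
case: (pickP (fun x => x \notin S)) => [x Hx|Hall].
  have := congr1 (fun a : ptrans n => a x) H; rewrite !ffunE /= (negbTE Hx) => [[]] Hi.
  have := congr1 (@nat_of_ord n) Hi; rewrite !iter_val => /eqP.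
  rewrite eqn_modDl => /eqP Hk.
  apply: cat_proper; first reflexivity.
  exact: gpow_mod.
have -> : S = setT by apply/setP => x; rewrite in_setT; have := Hall x; rewrite /= => /negbFE.
rewrite EsetT !Zgk; reflexivity.
Qed.

Lemma main_m : is_presentation n (Qrels n).
Proof.
split; [|split; [|split]].
- move=> [] [] // H; have := congr1 (fun a : ptrans n => a ord0) H; by rewrite /= !ffunE.
- by move=> w; rewrite ev_sem; exact: in_CIn_sem.
- exact: surj.
- move=> u v; split; last exact: congr_sound.
  rewrite !ev_sem => H.
  transitivity (W (run st0 u)).
    by have := run_W u st0; rewrite W0.
  rewrite (sem_complete H).
  by symmetry; have := run_W v st0; rewrite W0.
Qed.

Lemma sum_pred k : (sumn (map predn (iota 1 k))).*2 = k * k - k.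
Proof.
elim: k => [|k IH] //.
rewrite -[k.+1]addn1 iotaD map_cat sumn_cat /= doubleD IH -!mul2n; nia.
Qed.

Lemma count_m : (size (Qrels n)).*2 = n ^ 2 - n + 6.
Proof.
rewrite /Qrels !size_cat /= /Q3 size_flatten /shape -map_comp.
rewrite (@eq_map _ _ _ predn); last by move=> j /=; rewrite size_map size_iota.
have := sum_pred n; rewrite -!mul2n => H.
rewrite !mulnDr H; nia.
Qed.

End Main.

Theorem theorem2p7 (n : nat) : 1 <= n ->
  is_presentation n (Qrels n) /\
  size [:: Gg; Ge] = 2 /\
  (size (Qrels n)).*2 = n ^ 2 - n + 6.
Proof.
case: n => [//|m] _; split; [exact: main_m | split; [by [] | exact: count_m]].
Qed.
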